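(* Let $\theta$ be the formula $\mathrm{dep}(c)\wedge x\perp\!\!\!\perp y\wedge x\approx y\wedge((x=c\wedge y=c)\leftrightarrow z=c)$ and let $\phi(x)=\exists c\,\exists y\,\forall z\,\theta$. Let $\mathfrak A$ be a finite structure with domain $A$ of size $n$ and $\mathbb X$ a probabilistic team with variable domain $\{x\}$. If $\mathfrak A\models_{\mathbb X}\phi(x)$, then there is $a\in A$ with $|\mathbb X_{x=a}|=1/\sqrt n$.
   Context: Teams and probabilistic team semantics. A team $X$ is a finite set of assignments $s\colon D\to A$ for a finite set $D$ of first-order variables (its variable domain) and a finite set $A$. A probabilistic team is a function $\mathbb X\colon X\to[0,1]$ with $\sum_{s\in X}\mathbb X(s)=1$ (the empty function is also a probabilistic team). Write $\mathrm{supp}(\mathbb X)=\{s:\mathbb X(s)>0\}$, $|\mathbb X|=\sum_s\mathbb X(s)$, and for a first-order formula $\alpha$, $\mathbb X_\alpha$ is the restriction of $\mathbb X$ to assignments satisfying $\alpha$; e.g. $|\mathbb X_{\vec x=\vec a}|$ is the total weight of assignments mapping $\vec x$ to $\vec a$. Sums and scalar multiples of teams are pointwise. The marginal of $\mathbb X$ on a variable set $V$ is $s\mapsto\sum_{t\upharpoonright V=s}\mathbb X(t)$. For a variable $x$ and finite set $A$, $\mathbb X[A/x]$ is the team on all assignments $s$ over $\mathrm{Dom}(\mathbb X)\cup\{x\}$ with $s(x)\in A$ whose restriction to $\mathrm{Dom}(\mathbb X)\setminus\{x\}$ lies in the support of the marginal $\mathbb X'$ of $\mathbb X$ on $\mathrm{Dom}(\mathbb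 X)\setminus\{x\}$, given by $s\mapsto\mathbb X'(s\upharpoonright(\mathrm{Dom}(\mathbb X)\setminus\{x\}))/|A|$. Formulae are in negation normal form; for first-order $\alpha,\beta$, $\alpha^\bot$ is the negation normal form of $\neg\alpha$ and $\alpha\leftrightarrow\beta$ abbreviates $(\alpha\wedge\beta)\vee(\alpha^\bot\wedge\beta^\bot)$. For a $\tau$-structure $\mathfrak A$ with domain $A$: $\mathfrak A\models_{\mathbb X}l$ for a first-order literal $l$ iff $\mathfrak A\models_s l$ for all $s\in\mathrm{supp}(\mathbb X)$; $\mathfrak A\models_{\mathbb X}\psi\wedge\theta$ iff both hold; $\mathfrak A\models_{\mathbb X}\psi\vee\theta$ iff there are probabilistic teams $\mathbb Y,\mathbb Z$ and $\alpha\in[0,1]$ with $\alpha\mathbb Y+(1-\alpha)\mathbb Z=\mathbb X$, $\mathfrak A\models_{\mathbb Y}\psi$ and $\mathfrak A\models_{\mathbb Z}\theta$; $\mathfrak A\models_{\mathbb X}\forall x\psi$ iff $\mathfrak A\models_{\mathbb X[A/x]}\psi$; $\mathfrak A\models_{\mathbb X}\exists x\psi$ iff $\mathfrak A\models_{\mathbb Y}\psi$ for some probabilistic team $\mathbb Y$ over $\mathrm{Dom}(\mathbb X)\cup\{x\}$ with $x$-values in $A$ whose marginal on $\mathrm{Dom}(\mathbb X)\setminus\{x\}$ equals that of $\mathbb X$. Atoms. Marginal identity $\vec x\approx\vec y$ ($\vec x,\vec y$ of equal length $k$): $|\mathbb X_{\vec x=\vec a}|=|\mathbb X_{\vec y=\vec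 a}|$ for all $\vec a\in A^k$. Dependence $\mathrm{dep}(\vec x,y)$: all $s,s'\in\mathrm{supp}(\mathbb X)$ with $s(\vec x)=s'(\vec x)$ satisfy $s(y)=s'(y)$ (for empty $\vec x$, written $\mathrm{dep}(y)$: $y$ is constant on the support). Marginal independence $\vec y\perp\!\!\!\perp\vec z$: $|\mathbb X_{\vec y=\vec b}|\cdot|\mathbb X_{\vec z=\vec c}|=|\mathbb X_{\vec y\vec z=\vec b\vec c}|\cdot|\mathbb X|$ for all tuples $\vec b,\vec c$. *)

(* Defs.v *)
From mathcomp Require Import all_boot all_order all_algebra.
From mathcomp Require Import reals.
Set Implicit Arguments. Unset Strict Implicit. Unset Printing Implicit Defensive.
Import Order.TTheory GRing.Theory Num.Theory.
Local Open Scope ring_scope.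

(* V : finite type of first-order variables, A : domain of the structure.  *)
(* An assignment with variable domain D is encoded as a function           *)
(* V -> option A which is Some exactly on D.  A probabilistic team is a    *)
(* weight function on such assignments; assignments of weight 0 are        *)
(* irrelevant (the semantics only uses supports and sums), and the empty   *)
(* team is the constantly-0 function.                                      *)

Definition assign (V A : finType) := {ffun V -> option A}.

Section Semantics.
Variables (R : realType) (V A : finType).

Definition team := assign V A -> R.

Definition isPT (X : team) : Prop :=
  (forall s, 0 <= X s) /\ ((\sum_(s : assign V A) X s = 1) \/ (forall s, X s = 0)).

Definition tot (X : team) : R := \sum_(s : assign V A) X s.

Definition wt (X : team) (xs : seq V) (a : seq A) : R :=
  \sum_(s : assign V A | [seq s v | v <- xs] == [seq Some b | b <- a]) X s.

Definition restrict (x : V) (s : assign V A) : assign V A :=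
  [ffun v => if v == x then None else s v].

Definition marg (x : V) (X : team) (t : assign V A) : R :=
  \sum_(s : assign V A | restrict x s == t) X s.

Definition dupl (x : V) (X : team) : team :=
  fun s => if s x is Some _ then marg x X (restrict x s) / #|A|%:R else 0.

(* Formulae in negation normal form (empty vocabulary: only equality
   literals; the formula of the theorem uses no other symbols). *)
Inductive formula :=
| fEq  of V & V
| fNeq of V & V
| fMI  of seq V & seq V
| fDep of seq V & V
| fInd of seq V & seq V
| fAnd of formula & formula
| fOr  of formula & formula
| fEx  of V & formula
| fAll of V & formula.

Fixpoint sat (f : formula) (X : team) : Prop :=
  match f with
  | fEq u v => forall s, X s != 0 -> s u = s v
  | fNeq u v => forall s, X s != 0 -> s u != s v
  | fMI xs ys => forall a : seq A, size a = size xs -> wt X xs a = wt X ys a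
  | fDep xs y => forall s s', X s != 0 -> X s' != 0 ->
                   [seq s v | v <- xs] = [seq s' v | v <- xs] -> s y = s' y
  | fInd ys zs => forall b c : seq A, size b = size ys -> size c = size zs ->
                   wt X ys b * wt X zs c = wt X (ys ++ zs) (b ++ c) * tot X
  | fAnd f1 f2 => sat f1 X /\ sat f2 X
  | fOr f1 f2 => exists (Y Z : team) (al : R),
                   [/\ 0 <= al <= 1, isPT Y, isPT Z,
                       (forall s, X s = al * Y s + (1 - al) * Z s) &
                       (sat f1 Y /\ sat f2 Z)]
  | fEx x f1 => exists Y : team,
                   [/\ isPT Y, (forall s, Y s != 0 -> s x != None),
                       (forall t, marg x Y t = marg x X t) & sat f1 Y]
  | fAll x f1 => sat f1 (dupl x X)
  end.

(* negation normal form of the negation of a first-order formula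
   (only applied to first-order formulae) *)
Fixpoint fneg (f : formula) : formula :=
  match f with
  | fEq u v => fNeq u v
  | fNeq u v => fEq u v
  | fAnd f1 f2 => fOr (fneg f1) (fneg f2)
  | fOr f1 f2 => fAnd (fneg f1) (fneg f2)
  | fEx x f1 => fAll x (fneg f1)
  | fAll x f1 => fEx x (fneg f1)
  | g => g
  end.

Definition fIff (a b : formula) : formula :=
  fOr (fAnd a b) (fAnd (fneg a) (fneg b)).

Definition theta (x c y z : V) : formula :=
  fAnd (fDep [::] c)
   (fAnd (fInd [:: x] [:: y])
    (fAnd (fMI [:: x] [:: y])
          (fIff (fAnd (fEq x c) (fEq y c)) (fEq z c)))).

Definition phi (x c y z : V) : formula :=
  fEx c (fEx y (fAll z (theta x c y z))).

End Semantics.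

(* Main.v *)
Require Import Defs.
From mathcomp Require Import all_boot all_order all_algebra.
From mathcomp Require Import reals.
Set Implicit Arguments. Unset Strict Implicit. Unset Printing Implicit Defensive.
Import Order.TTheory GRing.Theory Num.Theory.
Local Open Scope ring_scope.

Section H.
Variables (R : realType) (V A : finType).
Implicit Types (X Y : team R V A) (s t : assign V A).

Definition upd (z : V) t (o : option A) : assign V A :=
  [ffun v => if v == z then o else t v].

Lemma restrict_upd z t o : t z = None -> restrict z (upd z t o) = t.
Proof. by move=> tz; apply/ffunP=> v; rewrite !ffunE; case: eqP => [->|]. Qed.

Lemma upd_eq z s t o : t z = None ->
  ((s z == o) && (restrict z s == t)) = (s == upd z t o).
Proof.
move=> tz; apply/idP/idP => [/andP [/eqP so /eqP st]|/eqP ->].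
  apply/eqP/ffunP=> v; rewrite !ffunE -st ffunE; by case: eqP => [->|].
by rewrite restrict_upd // ffunE eqxx !eqxx.
Qed.
Lemma sum_upd z t o (F : assign V A -> R) : t z = None ->
  \sum_(s : assign V A | (s z == o) && (restrict z s == t)) F s = F (upd z t o).
Proof.
move=> tz; rewrite (eq_bigl (fun s => s == upd z t o)); last by move=> s; rewrite upd_eq.
by rewrite big_pred1_eq.
Qed.

Lemma nin0 (v : V) : v \notin [::]. Proof. by []. Qed.

Lemma wt_marg v Y xs a : v \notin xs ->
  wt Y xs a = \sum_(t : assign V A) (if [seq t w | w <- xs] == [seq Some b | b <- a]
                      then marg v Y t else 0).
Proof.
move=> vx.
have cE s : [seq restrict v s w | w <- xs] = [seq s w | w <- xs].
  apply/eq_in_map=> w wx; rewrite ffunE; case: eqP => // ew.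
  by move: vx; rewrite -ew wx.
rewrite /wt -big_mkcond /=.
rewrite (partition_big (restrict v)
   (fun t => [seq t w | w <- xs] == [seq Some b | b <- a])) /=; last first.
  by move=> s; rewrite cE.
apply: eq_bigr=> t ct; rewrite /marg; apply: eq_bigl=> s.
case: (restrict v s =P t)=> [e|]; last by rewrite andbF.
by rewrite -cE e ct.
Qed.

Lemma wt_margE v X Y xs a : v \notin xs -> (forall t, marg v Y t = marg v X t) ->
  wt Y xs a = wt X xs a.
Proof.
move=> vx m; rewrite (wt_marg Y a vx) (wt_marg X a vx).
by apply: eq_bigr=> t _; rewrite m.
Qed.

Lemma tot_wt Y : tot Y = wt Y [::] [::].
Proof. by rewrite /wt /tot; apply: eq_bigl. Qed.

Lemma tot_margE v X Y : (forall t, marg v Y t = marg v X t) -> tot Y = tot X.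
Proof. by move=> m; rewrite !tot_wt (wt_margE [::] (nin0 v) m). Qed.

Lemma marg_nz v Y t : marg v Y t != 0 -> exists s, restrict v s = t /\ Y s != 0.
Proof.
move=> H; case: (boolP [exists s, (restrict v s == t) && (Y s != 0)]).
  by case/existsP=> s /andP [/eqP st Ys]; exists s.
move/existsPn=> N; move/eqP: H; case; apply: big1=> s st.
by move: (N s); rewrite st /= negbK => /eqP.
Qed.

Lemma marg_pos v Y s : (forall s, 0 <= Y s) -> Y s != 0 ->
  marg v Y (restrict v s) != 0.
Proof.
move=> Y0 Ys; rewrite /marg (bigD1 s) //=.
have: 0 < Y s by rewrite lt_def Ys Y0.
move=> Yp; rewrite gt_eqF // ltr_wpDr //.
by apply: sumr_ge0=> i _; apply: Y0.
Qed.

Lemma dupl_nz z Y s : dupl z Y s != 0 -> s z != None /\ marg z Y (restrict z s) != 0.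
Proof.
rewrite /dupl; case: (s z) => [b H|]; last by rewrite eqxx. split => //.
by apply/eqP=> m; move: H; rewrite m mul0r eqxx.
Qed.

Lemma dupl_sum z Y s : dupl z Y s =
  \sum_(b : A) (if s z == Some b then marg z Y (restrict z s) / #|A|%:R else 0).
Proof.
rewrite /dupl; case E: (s z) => [b0|].
  rewrite -big_mkcond /= (eq_bigl (fun b => b == b0)) ?big_pred1_eq //.
  by move=> b; rewrite eq_sym; apply/eqP/eqP=> [[]|->].
by rewrite big1.
Qed.

Lemma marg_dupl z Y t : (0 < #|A|)%N -> marg z (dupl z Y) t = marg z Y t.
Proof.
move=> nA; case tz: (t z) => [b|]; last first.
  rewrite {1}/marg.
  under eq_bigr do rewrite dupl_sum.
  rewrite exchange_big /=.
  under eq_bigr => b _.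
    rewrite -big_mkcondr /=.
    rewrite (eq_bigl (fun s => (s z == Some b) && (restrict z s == t))); last first.
      by move=> s; rewrite andbC.
    rewrite (@sum_upd z t (Some b) (fun s => marg z Y (restrict z s) / #|A|%:R) tz).
    rewrite restrict_upd //.
  over.
  rewrite /= sumr_const.
  set k := #|_|; have -> : k = #|A| by [].
  rewrite -[X in X = _]mulr_natr divfK //.
  by rewrite pnatr_eq0 -lt0n.
have nt s : restrict z s == t = false.
  by apply/negbTE/eqP=> e; move: tz; rewrite -e ffunE eqxx.
by rewrite /marg !big_pred0.
Qed.

Lemma wt_dupl_z z Y d : wt (dupl z Y) [:: z] [:: d] = tot Y / #|A|%:R.
Proof.
rewrite /wt /=.
rewrite (eq_bigl (fun s => s z == Some d)); last by move=> s; rewrite eqseq_cons andbT.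
rewrite (partition_big (restrict z) (fun t => t z == None)) /=; last first.
  by move=> s _; rewrite ffunE eqxx.
have -> : tot Y = \sum_(t : assign V A | t z == None) marg z Y t.
  rewrite tot_wt (wt_marg Y [::] (nin0 z)) /= (bigID (fun t => t z == None)) /=.
  rewrite [X in _ + X]big1 ?addr0 //.
  move=> t /negbTE tz; apply: big1=> s /eqP st.
  by move: tz; rewrite -st ffunE eqxx.
rewrite mulr_suml; apply: eq_bigr=> t /eqP tz.
rewrite (@sum_upd z t (Some d) (dupl z Y) tz) /dupl !ffunE eqxx restrict_upd //.
Qed.

Lemma sum_nz Y : \sum_s Y s != 0 -> exists s, Y s != 0.
Proof.
move=> H; case: (boolP [exists s, Y s != 0]); first by case/existsP=> s; exists s.
move/existsPn=> N; move/eqP: H; case; apply: big1=> s _.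
by move: (N s); rewrite negbK => /eqP.
Qed.

Lemma restr_eq v s s' w : restrict v s = restrict v s' -> w != v -> s w = s' w.
Proof.
move=> e wv; have := congr1 (fun f : assign V A => f w) e.
by rewrite !ffunE (negbTE wv).
Qed.

End H.

Theorem mainTheorem17 (R : realType) (V A : finType) (x c y z : V)
  (X : team R V A) :
  uniq [:: x; c; y; z] ->
  isPT X ->
  (* X has variable domain {x} *)
  (forall s, X s != 0 -> forall v, (s v != None) = (v == x)) ->
  (* X is not the empty team *)
  \sum_s X s = 1 ->
  sat (phi x c y z) X ->
  exists a : A, wt X [:: x] [:: a] = (Num.sqrt (#|A|%:R : R))^-1.
Proof.
move=> Hu HX Hdom Hsum.
rewrite /phi /theta /fIff /=.
move=> [Y1 [PT1 Hc1 M1 [Y2 [PT2 Hy2 M2 [Hdep [Hind [HMI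
   [Y [Z [al [Hal PTY PTZ HYZ [[[Yxc Yyc] Yzc]
     [[Z1 [Z2 [be [Hbe PTZ1 PTZ2 HZ [Z1x Z2y]]]]] Zzc]]]]]]]]]]]]].
move: Hu => /= /andP []; rewrite !inE !negb_or => /and3P [xc xy xz].
move=> /andP [] /andP [cy cz] /andP [] yz _.
set Y3 := dupl z Y2.
have nA : (0 < #|A|)%N.
  have [s0 Xs0] : exists s, X s != 0 by apply: sum_nz; rewrite Hsum oner_neq0.
  have := Hdom s0 Xs0 x; rewrite eqxx; case E: (s0 x) => [b|] // _.
  by apply/card_gt0P; exists b.
have m3 t : marg z Y3 t = marg z Y2 t by apply: marg_dupl.
have pX a : wt Y3 [:: x] a = wt X [:: x] a.
  rewrite (wt_margE (v := z) (X := Y2)) ?inE 1?eq_sym //.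
  rewrite (wt_margE (v := y) (X := Y1)) ?inE 1?eq_sym //.
  by rewrite (wt_margE (v := c) (X := X)) ?inE 1?eq_sym.
have t2 : tot Y2 = 1.
  by rewrite (tot_margE M2) (tot_margE M1) /tot Hsum.
have t3 : tot Y3 = 1 by rewrite (tot_margE m3).
have [s0 Hs0] : exists s, Y3 s != 0.
  apply: sum_nz; rewrite -/(tot Y3) t3; exact: oner_neq0.
have [d Ed] : exists d, s0 c = Some d.
  have [_ mz] := dupl_nz Hs0.
  have [s1 [e1 Hs1]] := marg_nz mz.
  have my := marg_pos y PT2.1 Hs1.
  rewrite M2 in my.
  have [s2 [e2 Hs2]] := marg_nz my.
  have := Hc1 s2 Hs2.
  rewrite (restr_eq e2 cy) (restr_eq e1 cz).
  by case: (s0 c) => [d|] // _; exists d.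
have Hc s : Y3 s != 0 -> s c = Some d.
  by move=> Hs; rewrite -Ed; apply: (Hdep s s0 Hs Hs0).
have key s : Y3 s != 0 -> ((s x == Some d) && (s y == Some d)) = (s z == Some d).
  move=> Hs; have sc := Hc s Hs.
  case: (eqVneq (Y s) 0) => [Y0|Yn]; last first.
    by rewrite (Yxc s Yn) (Yyc s Yn) (Yzc s Yn) sc eqxx.
  have Zn : Z s != 0.
    apply/negP=> /eqP Z0; move: Hs; rewrite /Y3 HYZ Y0 Z0 !mulr0 addr0 eqxx //.
  have Zz := Zzc s Zn; rewrite sc in Zz; rewrite (negbTE Zz).
  case: (eqVneq (Z1 s) 0) => [Z10|Z1n]; last first.
    by have := Z1x s Z1n; rewrite sc => /negbTE ->.
  have Z2n : Z2 s != 0.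
    apply/negP=> /eqP Z20; move: Zn; rewrite HZ Z10 Z20 !mulr0 addr0 eqxx //.
  by have := Z2y s Z2n; rewrite sc => /negbTE ->; rewrite andbF.
have exy : wt Y3 [:: x; y] [:: d; d] = wt Y3 [:: z] [:: d].
  rewrite /wt big_mkcond [RHS]big_mkcond; apply: eq_bigr=> s _ /=.
  case: (eqVneq (Y3 s) 0) => [->|H]; first by rewrite !if_same.
  by rewrite !eqseq_cons ?eqxx ?andbT key.
have ez : wt Y3 [:: z] [:: d] = (#|A|%:R)^-1.
  by rewrite /Y3 wt_dupl_z t2 mul1r.
have hi := Hind [:: d] [:: d] erefl erefl.
have hm := HMI [:: d] erefl.
rewrite /= t3 mulr1 exy ez -hm in hi.
exists d; rewrite -pX; apply/eqP.
have p0 : 0 <= wt Y3 [:: x] [:: d].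
  by rewrite pX; apply: sumr_ge0=> s _; apply: HX.1.
rewrite -(eqrXn2 (n := 2)) // ?invr_ge0 ?sqrtr_ge0 //.
by rewrite expr2 hi exprVn sqr_sqrtr ?ler0n.
Qed.
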